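(* If $\rho_{AB}$ is supported on the symmetric subspace or on the antisymmetric subspace of $\mathcal H_A\otimes\mathcal H_B$ (with $\mathcal H_A\cong\mathcal H_B$), then $\Upsilon(A:B)=0$. In particular, $\Upsilon(A:B)=0$ for every pure state $\rho_{AB}=\ket\phi\bra\phi_{AB}$.
   Context: Let $\rho_{AB}$ be a finite-dimensional bipartite state shared by Alice ($A$) and Bob ($B$), with $A$ and $B$ of the same dimension so that they can be swapped. Let $\ket{\psi}_{ABR}$ be a purification, i.e. ${\rm Tr}_R\ket\psi\bra\psi_{ABR}=\rho_{AB}$, where $R$ is an inaccessible reference system. Let $\psi_{BAR}$ denote the state obtained from $\psi_{ABR}$ by applying the swap of $A$ and $B$. A state exchange protocol on $n$ copies is an LOCC operation between Alice and Bob, acting on $\psi_{ABR}^{\otimes n}$ (with $R$ untouched) together with a supply of maximally entangled qubit pairs (ebits) shared between Alice and Bob, producing a state $\rho^{ex}_{ABR}$. It is faithful if $F(\rho^{ex}_{ABR},\psi_{BAR}^{\otimes n})\to1$ as $n\to\infty$, where $F(\rho,\sigma)={\rm Tr}\sqrt{\sqrt\sigma\rho\sqrt\sigma}$. The uncommon information $\Upsilon(A:B)$ is the infimum of rates $r$ (ebits consumed per copy, asymptotically) for which faithful state exchange protocols exist, classical communication being free. For a pure state $\ket\phi_{AB}$, the symmetric/antisymmetric subspace is taken with respect to a suitable local identification of $\mathcal H_A$ and $\mathcal H_B$ (e.g. via the Schmidt bases). *)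

(* Defs.v *)
From HB Require Import structures.
From mathcomp Require Import all_boot all_order all_algebra.
From mathcomp Require Import complex.
From mathcomp Require Import classical_sets filter reals topology normedtype sequences.
Set Implicit Arguments. Unset Strict Implicit. Unset Printing Implicit Defensive.
Import Order.TTheory GRing.Theory Num.Theory numFieldNormedType.Exports.
Local Open Scope ring_scope.
Local Open Scope classical_set_scope.

Section QuantumStateExchange.
Variable R : realType.
Local Notation C := R[i].

(* A Hilbert space is C^T for a finite type T of basis labels; an operator
   from C^T to C^T' is a #|T'| x #|T| complex matrix, whose rows/columns are
   labelled through enum_rank / enum_val. *)
Definition op (T T' : finType) := 'M[C]_(#|T'|, #|T|).
Definition sop (T : finType) := op T T.
Definition ket (T : finType) := 'cV[C]_#|T|.

Definition mkop (T T' : finType) (f : T' -> T -> C) : op T T' :=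
  \matrix_(i, j) f (enum_val i) (enum_val j).
Definition ent (T T' : finType) (M : op T T') (x' : T') (x : T) : C :=
  M (enum_rank x') (enum_rank x).
Definition mkket (T : finType) (f : T -> C) : ket T := \col_i f (enum_val i).
Definition kent (T : finType) (v : ket T) (x : T) : C := v (enum_rank x) 0.

Definition adj m n (M : 'M[C]_(m, n)) : 'M[C]_(n, m) := (map_mx Num.conj M)^T.

Definition proj (T : finType) (v : ket T) : sop T := v *m adj v.

Definition tens (T1 T1' T2 T2' : finType) (K : op T1 T1') (L : op T2 T2') :
  op (T1 * T2)%type (T1' * T2')%type :=
  mkop (fun x' x => ent K x'.1 x.1 * ent L x'.2 x.2).

Definition psd n (M : 'M[C]_n) : Prop :=
  M = adj M /\ forall v : 'cV[C]_n, 0 <= (adj v *m M *m v) 0 0.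
Definition density n (M : 'M[C]_n) : Prop := psd M /\ \tr M = 1.

Definition sqrtm n (M : 'M[C]_n) : 'M[C]_n :=
  xget 0 [set X : 'M[C]_n | psd X /\ X *m X = M].

Definition fidelity n (rho sigma : 'M[C]_n) : C :=
  \tr (sqrtm (sqrtm sigma *m rho *m sqrtm sigma)).

Definition ptrace2 (T TR : finType) (X : sop (T * TR)%type) : sop T :=
  mkop (fun x' x => \sum_(r : TR) ent X (x', r) (x, r)).

Definition sym_vec d (v : ket ('I_d * 'I_d)%type) : Prop :=
  forall a b, kent v (a, b) = kent v (b, a).
Definition antisym_vec d (v : ket ('I_d * 'I_d)%type) : Prop :=
  forall a b, kent v (a, b) = - kent v (b, a).
Definition supported_on (T : finType) (P : ket T -> Prop) (rho : sop T) :=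
  forall w : ket T, P (rho *m w).

Definition purifies d dR (psi : ket (('I_d * 'I_d) * 'I_dR)%type)
  (rho : sop ('I_d * 'I_d)%type) : Prop :=
  adj psi *m psi = 1 /\ ptrace2 (proj psi) = rho.

Definition chan (TR TA TB TA' TB' : finType) :=
  sop ((TA * TB) * TR)%type -> sop ((TA' * TB') * TR)%type.

Definition onA (TR TA TB TA1 : finType) (K : op TA TA1) :
  op ((TA * TB) * TR)%type ((TA1 * TB) * TR)%type := tens (tens K 1%:M) 1%:M.
Definition onB (TR TA TB TB1 : finType) (K : op TB TB1) :
  op ((TA * TB) * TR)%type ((TA * TB1) * TR)%type := tens (tens 1%:M K) 1%:M.

(* A finite-round LOCC protocol: in each round one party performs a local
   quantum instrument with Kraus operators (K m)_m (sum K^* K = 1), broadcasts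
   the outcome m, and the remaining protocol may depend on m. *)
Inductive LOCC (TR : finType) :
  forall (TA TB TA' TB' : finType), chan TR TA TB TA' TB' -> Prop :=
| LOCC_id (TA TB : finType) : @LOCC TR TA TB TA TB (fun X => X)
| LOCC_A (TA TB TA1 TA' TB' M : finType) (K : M -> op TA TA1)
    (L : M -> chan TR TA1 TB TA' TB') :
    \sum_(m : M) adj (K m) *m K m = 1%:M ->
    (forall m, @LOCC TR TA1 TB TA' TB' (L m)) ->
    @LOCC TR TA TB TA' TB'
      (fun X => \sum_(m : M) L m (onA TR TB (K m) *m X *m adj (onA TR TB (K m))))
| LOCC_B (TA TB TB1 TA' TB' M : finType) (K : M -> op TB TB1)
    (L : M -> chan TR TA TB1 TA' TB') :
    \sum_(m : M) adj (K m) *m K m = 1%:M ->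
    (forall m, @LOCC TR TA TB1 TA' TB' (L m)) ->
    @LOCC TR TA TB TA' TB'
      (fun X => \sum_(m : M) L m (onB TR TA (K m) *m X *m adj (onB TR TA (K m)))).

Notation Ln d n := {ffun 'I_n -> 'I_d}.
Notation Eb k := {ffun 'I_k -> bool}.               (* labels of k ebit halves *)

Definition copies d dR (psi : ket (('I_d * 'I_d) * 'I_dR)%type) n :
  ket ((Ln d n * Ln d n) * Ln dR n)%type :=
  mkket (fun x : ((Ln d n * Ln d n) * Ln dR n)%type => \prod_(i < n) kent psi ((x.1.1 i, x.1.2 i), x.2 i)).

(* psi_BAR^{(x) n}: A and B swapped (bases identified via the labels) *)
Definition swapped_copies d dR (psi : ket (('I_d * 'I_d) * 'I_dR)%type) n :
  ket ((Ln d n * Ln d n) * Ln dR n)%type :=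
  mkket (fun x : ((Ln d n * Ln d n) * Ln dR n)%type => \prod_(i < n) kent psi ((x.1.2 i, x.1.1 i), x.2 i)).

(* psi_ABR^{(x) n} (x) Phi^{(x) k}, Phi = (|00> + |11>)/sqrt 2;
   Alice holds (a^n, e_A), Bob holds (b^n, e_B) *)
Definition input_state d dR (psi : ket (('I_d * 'I_d) * 'I_dR)%type) n k :
  ket (((Ln d n * Eb k) * (Ln d n * Eb k)) * Ln dR n)%type :=
  mkket (fun x : (((Ln d n * Eb k) * (Ln d n * Eb k)) * Ln dR n)%type =>
    kent (copies psi n) ((x.1.1.1, x.1.2.1), x.2) *
    (if x.1.1.2 == x.1.2.2 then (((Num.sqrt (2 : R))^-1) ^+ k)%:C%C else 0)).

(* r is an achievable rate: there are ebit numbers k n with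
   limsup_n k n / n <= r and LOCC protocols Lam n on psi^{(x)n} (x) Phi^{(x) k n}
   whose outputs rho^ex_n satisfy F(rho^ex_n, psi_BAR^{(x) n}) -> 1. *)
Definition achievable_rate d dR (psi : ket (('I_d * 'I_d) * 'I_dR)%type)
  (r : R) : Prop :=
  exists (k : nat -> nat)
         (Lam : forall n, chan (Ln dR n) (Ln d n * Eb (k n))%type (Ln d n * Eb (k n))%type
                                 (Ln d n) (Ln d n)),
    (forall n, LOCC (Lam n)) /\
    (forall delta : R, 0 < delta ->
       \forall n \near \oo, (k n)%:R <= (r + delta) * n%:R) /\
    ((fun n => complex.Re
        (fidelity (Lam n (proj (input_state psi n (k n))))
                  (proj (swapped_copies psi n)))) @ \oo --> (1 : R)).

(* uncommon information Upsilon(A:B) (computed from the purification psi) *)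
Definition uncommon_information d dR (psi : ket (('I_d * 'I_d) * 'I_dR)%type)
  : R := inf [set r : R | achievable_rate psi r].

End QuantumStateExchange.

(* Main.v *)
Require Import Defs.
From HB Require Import structures.
From mathcomp Require Import all_boot all_order all_algebra.
From mathcomp Require Import complex.
From mathcomp Require Import classical_sets reals topology normedtype sequences.
From mathcomp Require Import ring.
Set Implicit Arguments. Unset Strict Implicit. Unset Printing Implicit Defensive.
Import Order.TTheory GRing.Theory Num.Theory numFieldNormedType.Exports.
Local Open Scope ring_scope.

Section Basics.
Variable R : realType.
Local Notation C := R[i].

Lemma sum_enum (T : finType) (F : 'I_#|T| -> C) :
  \sum_(i < #|T|) F i = \sum_(x : T) F (enum_rank x).
Proof.
rewrite (reindex (@enum_rank T)) //.
by exists (@enum_val _ T) => x _; rewrite ?enum_rankK ?enum_valK.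
Qed.

Lemma ent_mkop (T T' : finType) (f : T' -> T -> C) x' x :
  ent (mkop f) x' x = f x' x.
Proof. by rewrite /ent /mkop mxE !enum_rankK. Qed.

Lemma kent_mkket (T : finType) (f : T -> C) x : kent (mkket f) x = f x.
Proof. by rewrite /kent /mkket mxE enum_rankK. Qed.

Lemma ket_ext (T : finType) (v w : ket R T) :
  (forall x, kent v x = kent w x) -> v = w.
Proof.
move=> H; apply/matrixP => i j; rewrite (ord1 j).
by have := H (enum_val i); rewrite /kent enum_valK.
Qed.

Lemma op_ext (T T' : finType) (M N : op R T T') :
  (forall x' x, ent M x' x = ent N x' x) -> M = N.
Proof.
move=> H; apply/matrixP => i j.
by have := H (enum_val i) (enum_val j); rewrite /ent !enum_valK.
Qed.

Lemma ent_mul (T T' T'' : finType) (M : op R T' T'') (N : op R T T') x'' x :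
  ent (M *m N) x'' x = \sum_y ent M x'' y * ent N y x.
Proof. by rewrite /ent mxE sum_enum. Qed.

Lemma kent_mul (T T' : finType) (M : op R T T') (v : ket R T) x' :
  kent (M *m v) x' = \sum_x ent M x' x * kent v x.
Proof. by rewrite /kent mxE sum_enum. Qed.

Lemma ent1 (T : finType) x' x : ent (1%:M : sop R T) x' x = (x' == x)%:R.
Proof. by rewrite /ent mxE (inj_eq enum_rank_inj). Qed.

Lemma ent_adj (T T' : finType) (M : op R T T') x x' :
  ent (adj M : op R T' T) x x' = (ent M x' x)^*.
Proof. by rewrite /ent /adj !mxE. Qed.

Lemma ent_proj (T : finType) (v : ket R T) x' x :
  ent (proj v) x' x = kent v x' * (kent v x)^*.
Proof.
rewrite /ent /proj mxE big_ord1.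
by rewrite /adj !mxE.
Qed.

End Basics.

Section Mx.
Variable R : realType.
Local Notation C := R[i].

Lemma adjM m n p (A : 'M[C]_(m, n)) (B : 'M[C]_(n, p)) :
  adj (A *m B) = adj B *m adj A.
Proof. by rewrite /adj map_mxM trmx_mul. Qed.

Lemma adjK m n (A : 'M[C]_(m, n)) : adj (adj A) = A.
Proof. by apply/matrixP => i j; rewrite /adj !mxE conjCK. Qed.

Lemma adjD m n (A B : 'M[C]_(m, n)) : adj (A + B) = adj A + adj B.
Proof. by apply/matrixP => i j; rewrite /adj !mxE rmorphD. Qed.

Lemma adjN m n (A : 'M[C]_(m, n)) : adj (- A) = - adj A.
Proof. by apply/matrixP => i j; rewrite /adj !mxE rmorphN. Qed.

Lemma adj1 n : adj (1%:M : 'M[C]_n) = 1%:M.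
Proof. by apply/matrixP => i j; rewrite /adj !mxE eq_sym; case: (_ == _); rewrite /= ?rmorph1 ?rmorph0. Qed.

Lemma adjZ m n c (A : 'M[C]_(m, n)) : adj (c *: A) = c^* *: adj A.
Proof. by apply/matrixP => i j; rewrite /adj !mxE rmorphM. Qed.

Lemma AA0 m n (A : 'M[C]_(m, n)) : A *m adj A = 0 -> A = 0.
Proof.
move=> H; apply/matrixP => i j; rewrite mxE.
have /matrixP /(_ i i) := H; rewrite !mxE => /eqP.
rewrite psumr_eq0; last by move=> k _; rewrite /adj !mxE mul_conjC_ge0.
move=> /allP /(_ j (mem_index_enum _)) /=.
by rewrite /adj !mxE mul_conjC_eq0 => /eqP.
Qed.

Lemma sqrt_proj n (v : 'cV[C]_n) (P := v *m adj v) :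
  adj v *m v = 1 -> forall X, psd X -> X *m X = P -> X = P.
Proof.
move=> nv X [Xh Xpos] XX.
have PP : P *m P = P by rewrite /P mulmxA -(mulmxA v) nv mulmx1.
have Ph : adj P = P by rewrite /P adjM adjK.
set Q := 1%:M - P.
have Qh : adj Q = Q by rewrite /Q adjD adjN adj1 Ph.
have PQ : P *m Q = 0 by rewrite /Q mulmxBr mulmx1 PP subrr.
have XQ : X *m Q = 0.
  have H : adj (X *m Q) = 0.
    apply: AA0; rewrite adjK adjM Qh -Xh mulmxA -(mulmxA Q) XX.
    by rewrite -mulmxA PQ mulmx0.
  by rewrite -[X *m Q]adjK H /adj map_mx0 trmx0.
have XP : X = X *m P.
  apply/eqP; rewrite -subr_eq0.
  have -> : X - X *m P = X *m Q by rewrite /Q mulmxBr mulmx1.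
  by rewrite XQ.
have PX : X = P *m X by rewrite Xh {1}XP adjM Ph -Xh.
set c := (adj v *m X *m v) 0 0.
have XcP : X = c *: P.
  have E : X = P *m X *m P by rewrite -PX -XP.
  have M : adj v *m X *m v = c%:M.
    by apply/matrixP => i j; rewrite (ord1 i) (ord1 j) [RHS]mxE /= mulr1n.
  rewrite E /P !mulmxA.
  have -> : v *m adj v *m X *m v = v *m (adj v *m X *m v) by rewrite !mulmxA.
  by rewrite M mul_mx_scalar -scalemxAl.
have c0 : 0 <= c by apply: Xpos.
have Pn0 : P != 0.
  apply/eqP => P0.
  have : adj v *m P *m v = 1.
    by rewrite /P !mulmxA -(mulmxA (adj v *m v)) nv mulmx1.
  rewrite P0 mulmx0 mul0mx => /matrixP/(_ 0 0); rewrite !mxE /= => /eqP.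
  by rewrite eq_sym oner_eq0.
have cc : c * c = 1.
  move: XX; rewrite XcP -scalemxAl -scalemxAr scalerA PP => /eqP.
  rewrite -subr_eq0 -{2}[P]scale1r -scalerBl scaler_eq0 (negPf Pn0) orbF.
  by rewrite subr_eq0 => /eqP.
have c1 : c = 1.
  have : (c - 1) * (c + 1) = 0 by rewrite mulrDr mulr1 mulrBl mul1r cc addrA subrK subrr.
  move/eqP; rewrite mulf_eq0 subr_eq0 => /orP[/eqP //|].
  by rewrite gt_eqF // ltr_wpDl.
by rewrite XcP c1 scale1r.
Qed.

Lemma sqrtm_proj n (v : 'cV[C]_n) : adj v *m v = 1 ->
  sqrtm (v *m adj v) = v *m adj v.
Proof.
move=> nv; rewrite /sqrtm; apply: xget_unique.
  split; last by rewrite mulmxA -(mulmxA v) nv mulmx1.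
  split; first by rewrite adjM adjK.
  move=> w; rewrite !mulmxA -(mulmxA (adj w *m v)).
  set a := adj w *m v; have -> : adj v *m w = adj a by rewrite /a adjM adjK.
  rewrite mxE big_ord1 /adj !mxE; exact: mul_conjC_ge0.
by move=> X [] ? ?; apply: sqrt_proj.
Qed.

Lemma fidelity_proj n (v : 'cV[C]_n) : adj v *m v = 1 ->
  fidelity (v *m adj v) (v *m adj v) = 1.
Proof.
move=> nv; rewrite /fidelity sqrtm_proj //.
have PP : v *m adj v *m (v *m adj v) = v *m adj v by rewrite mulmxA -(mulmxA v) nv mulmx1.
rewrite PP PP sqrtm_proj // mxtrace_mulC nv.
by rewrite /mxtrace big_ord1 mxE.
Qed.

End Mx.

Section Gen.
Variable R : realType.
Local Notation C := R[i].

Lemma sum_pair (T1 T2 : finType) (F : (T1 * T2)%type -> C) :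
  \sum_p F p = \sum_x \sum_y F (x, y).
Proof. by rewrite pair_bigA; apply: eq_bigr => -[]. Qed.

Lemma sum_delta1 (T : finType) (y : T) (F : T -> C) :
  \sum_x (y == x)%:R * F x = F y.
Proof.
rewrite (bigD1 y) //= eqxx mul1r big1 ?addr0 // => x.
by rewrite eq_sym => /negPf ->; rewrite mul0r.
Qed.

Lemma sum_delta2 (T : finType) (y : T) (F : T -> C) :
  \sum_x F x * (y == x)%:R = F y.
Proof. by rewrite -[RHS](sum_delta1 y); apply: eq_bigr => x _; rewrite mulrC. Qed.

Lemma ent_tens (T1 T1' T2 T2' : finType) (K : op R T1 T1') (L : op R T2 T2') x' x :
  ent (tens K L) x' x = ent K x'.1 x.1 * ent L x'.2 x.2.
Proof. by rewrite /tens ent_mkop. Qed.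

Lemma kent_onA (TR TA TB TA1 : finType) (K : op R TA TA1) (v : ket R ((TA * TB) * TR)%type) a1 b r :
  kent (onA TR TB K *m v) ((a1, b), r) = \sum_a ent K a1 a * kent v ((a, b), r).
Proof.
rewrite kent_mul sum_pair sum_pair; apply: eq_bigr => a _.
rewrite (bigD1 b) //= [X in _ + X]big1 ?addr0; last first.
  move=> b' /negPf nb. apply: big1 => r' _.
  by rewrite /onA !ent_tens /= ent1 eq_sym nb mulr0 mul0r mul0r.
rewrite -[RHS](sum_delta2 r (fun r' => ent K a1 a * kent v ((a, b), r'))).
by apply: eq_bigr => r' _; rewrite /onA !ent_tens /= !ent1 eqxx mulr1 mulrAC.
Qed.

Lemma kent_onB (TR TA TB TB1 : finType) (K : op R TB TB1) (v : ket R ((TA * TB) * TR)%type) a b1 r :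
  kent (onB TR TA K *m v) ((a, b1), r) = \sum_b ent K b1 b * kent v ((a, b), r).
Proof.
rewrite kent_mul sum_pair sum_pair (bigD1 a) //= [X in _ + X]big1 ?addr0; last first.
  move=> a' /negPf na; apply: big1 => b' _; apply: big1 => r' _.
  by rewrite /onB !ent_tens /= ent1 eq_sym na !mul0r.
apply: eq_bigr => b _.
rewrite -[RHS](sum_delta2 r (fun r' => ent K b1 b * kent v ((a, b), r'))).
by apply: eq_bigr => r' _; rewrite /onB !ent_tens /= !ent1 !eqxx mul1r mulrAC.
Qed.

Lemma proj_mul (T T' : finType) (M : op R T T') (v : ket R T) :
  M *m proj v *m adj M = proj (M *m v).
Proof. by rewrite /proj adjM !mulmxA. Qed.

Lemma sum_prod_ffun (T : finType) n (F : 'I_n -> T -> C) :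
  \sum_(a : {ffun 'I_n -> T}) \prod_i F i (a i) = \prod_i \sum_t F i t.
Proof. by rewrite bigA_distr_bigA. Qed.

Lemma prod_delta (T : finType) n (f g : {ffun 'I_n -> T}) :
  \prod_i ((f i == g i)%:R : C) = (f == g)%:R.
Proof.
case: eqP => [->|ne]; first by rewrite big1 // => i _; rewrite eqxx.
have : ~~ [forall i, f i == g i].
  by apply/negP => /forallP H; apply: ne; apply/ffunP => i; apply/eqP.
rewrite negb_forall => /existsP[i ni].

by rewrite (bigD1 i) //= (negPf ni) mul0r.
Qed.

Lemma kent_adjmul (T : finType) (v w : ket R T) :
  (adj v *m w) 0 0 = \sum_x (kent v x)^* * kent w x.
Proof. rewrite mxE sum_enum; apply: eq_bigr => x _; by rewrite /adj !mxE. Qed.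

End Gen.

Section Proto.
Variable R : realType.
Local Notation C := R[i].
Variables d dR : nat.

Definition Kn (Kf : bool -> 'I_d -> 'I_d -> C) n (m : {ffun 'I_n -> bool}) :
  op R ({ffun 'I_n -> 'I_d} * {ffun 'I_0 -> bool})%type {ffun 'I_n -> 'I_d} :=
  mkop (fun (a' : {ffun 'I_n -> 'I_d}) (ae : ({ffun 'I_n -> 'I_d} * {ffun 'I_0 -> bool})%type) => \prod_i Kf (m i) (a' i) (ae.1 i)).

Lemma eb0 (e e' : {ffun 'I_0 -> bool}) : e = e'.
Proof. by apply/ffunP => -[]. Qed.

Lemma sum_eb0 (F : {ffun 'I_0 -> bool} -> C) e0 : \sum_e F e = F e0.
Proof. by rewrite (bigD1 e0) //= big1 ?addr0 // => e; rewrite (eb0 e e0) eqxx. Qed.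

Lemma ent_sum (T T' : finType) (I : finType) (M : I -> op R T T') x' x :
  ent (\sum_i M i) x' x = \sum_i ent (M i) x' x.
Proof. by rewrite /ent summxE. Qed.

Lemma Kn_complete (Kf : bool -> 'I_d -> 'I_d -> C) n :
  (forall a1 a2, \sum_b \sum_a' (Kf b a' a1)^* * Kf b a' a2 = (a1 == a2)%:R) ->
  \sum_(m : {ffun 'I_n -> bool}) adj (Kn Kf m) *m Kn Kf m = 1%:M.
Proof.
move=> HK; apply: op_ext => x' x; rewrite ent_sum ent1.
under eq_bigr => m _.
  rewrite ent_mul.
  under eq_bigr => a' _ do rewrite ent_adj !ent_mkop rmorph_prod -big_split /=.
  rewrite (sum_prod_ffun (fun i t => (Kf (m i) t (x'.1 i))^* * Kf (m i) t (x.1 i))).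
  over.
rewrite /= (sum_prod_ffun (fun i b => \sum_t (Kf b t (x'.1 i))^* * Kf b t (x.1 i))).
under eq_bigr => i _ do rewrite HK.
rewrite prod_delta; case: x' x => [a1 e1] [a2 e2] /=.
by rewrite (eb0 e1 e2) xpair_eqE eqxx andbT.
Qed.

Variables (psi : ket R (('I_d * 'I_d) * 'I_dR)%type) (KA KB : bool -> 'I_d -> 'I_d -> C) (s : C).

Definition one n : {ffun 'I_n -> bool} := [ffun => true].

Lemma kent_sc (T : finType) c (v : ket R T) x : kent (c *: v) x = c * kent v x.
Proof. by rewrite /kent mxE. Qed.

Hypothesis HK : forall b1 b2 a' b' r,
  \sum_b \sum_a KB b2 b' b * (KA b1 a' a * kent psi ((a, b), r)) =
  if b1 && b2 then s * kent psi ((b', a'), r) else 0.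

Lemma inner n (m : {ffun 'I_n -> bool}) a' b e r :
  kent (onA _ _ (Kn KA m) *m input_state psi n 0) ((a', (b, e)), r) =
  \sum_(a : {ffun 'I_n -> 'I_d}) (\prod_i KA (m i) (a' i) (a i)) * \prod_i kent psi ((a i, b i), r i).
Proof.
rewrite kent_onA sum_pair; apply: eq_bigr => a _; rewrite (sum_eb0 _ e).
rewrite !kent_mkket /= ent_mkop /= eqxx expr0.
by rewrite -[(1 : R)%:C%C]/(1 : C) mulr1.
Qed.

Lemma w_eq n (m m' : {ffun 'I_n -> bool}) :
  onB _ _ (Kn KB m') *m (onA _ _ (Kn KA m) *m input_state psi n 0) =
  (if (m == one n) && (m' == one n) then s ^+ n else 0) *: swapped_copies psi n.
Proof.
apply: ket_ext => -[[a' b'] r]; rewrite kent_onB kent_sc kent_mkket /=.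
rewrite sum_pair.
have E : forall b : {ffun 'I_n -> 'I_d},
  \sum_(e : {ffun 'I_0 -> bool}) ent (Kn KB m') b' (b, e) *
     kent (onA _ _ (Kn KA m) *m input_state psi n 0) ((a', (b, e)), r) =
  \prod_i \sum_t KB (m' i) (b' i) (b i) * (KA (m i) (a' i) t * kent psi ((t, b i), r i)).
  move=> b; rewrite (sum_eb0 _ [ffun => true]) inner ent_mkop /= big_distrr /=.
  rewrite -(sum_prod_ffun (fun i t => KB (m' i) (b' i) (b i) * (KA (m i) (a' i) t * kent psi ((t, b i), r i)))).
  by apply: eq_bigr => a _; rewrite /= -!big_split.
rewrite (eq_bigr _ (fun b _ => E b)) /=.
rewrite (sum_prod_ffun (fun i u => \sum_t KB (m' i) (b' i) u * (KA (m i) (a' i) t * kent psi ((t, u), r i)))).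
under eq_bigr => i _ do rewrite HK.
case: ifP => [/andP[/eqP -> /eqP ->]|H].
  have -> : s ^+ n = \prod_(i < n) s by rewrite prodr_const card_ord.
  by rewrite -big_split; apply: eq_bigr => i _; rewrite !ffunE.
rewrite mul0r.
have : ~~ [forall i, m i && m' i].
  apply/negP => /forallP A; move/negP: H; apply; apply/andP; split; apply/eqP;
  by apply/ffunP => i; rewrite ffunE; case/andP: (A i).
rewrite negb_forall => /existsP[i ni].
by rewrite (bigD1 i) //= (negPf ni) mul0r.
Qed.

Definition Lam n : chan R {ffun 'I_n -> 'I_dR}
  ({ffun 'I_n -> 'I_d} * {ffun 'I_0 -> bool})%type ({ffun 'I_n -> 'I_d} * {ffun 'I_0 -> bool})%type
  {ffun 'I_n -> 'I_d} {ffun 'I_n -> 'I_d} :=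
  fun X => \sum_(m : {ffun 'I_n -> bool})
    (fun Y => \sum_(m' : {ffun 'I_n -> bool})
       (fun Z => Z) (onB _ _ (Kn KB m') *m Y *m adj (onB _ _ (Kn KB m'))))
    (onA _ _ (Kn KA m) *m X *m adj (onA _ _ (Kn KA m))).

Hypothesis HA : forall a1 a2, \sum_b \sum_a' (KA b a' a1)^* * KA b a' a2 = (a1 == a2)%:R.
Hypothesis HB : forall a1 a2, \sum_b \sum_a' (KB b a' a1)^* * KB b a' a2 = (a1 == a2)%:R.
Hypothesis Hs : s * s^* = 1.

Lemma Lam_LOCC n : LOCC (@Lam n).
Proof.
pose L := fun m : {ffun 'I_n -> bool} => (fun Y : sop R (({ffun 'I_n -> 'I_d} * ({ffun 'I_n -> 'I_d} * {ffun 'I_0 -> bool})) * {ffun 'I_n -> 'I_dR})%type => \sum_(m' : {ffun 'I_n -> bool})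
       (fun Z => Z) (onB _ _ (Kn KB m') *m Y *m adj (onB _ _ (Kn KB m')))).
refine (@LOCC_A R _ _ _ _ _ _ _ (@Kn KA n) L (Kn_complete _ HA) _).
move=> m; rewrite /L.
refine (@LOCC_B R _ _ _ _ _ _ _ (@Kn KB n) (fun _ => (fun Z => Z)) (Kn_complete _ HB) _).
move=> m'; exact: LOCC_id.
Qed.

Lemma proj_sc (T : finType) c (v : ket R T) : proj (c *: v) = (c * c^*) *: proj v.
Proof. by rewrite /proj adjZ -scalemxAl -scalemxAr scalerA. Qed.

Lemma Lam_out n : @Lam n (proj (input_state psi n 0)) = proj (swapped_copies psi n).
Proof.
rewrite /Lam.
have E : forall m m' : {ffun 'I_n -> bool},
  onB _ _ (Kn KB m') *m (onA _ _ (Kn KA m) *m proj (input_state psi n 0) *m adj (onA _ _ (Kn KA m))) *m adj (onB _ _ (Kn KB m'))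
  = (if (m == one n) && (m' == one n) then 1 else 0) *: proj (swapped_copies psi n).
  move=> m m'; rewrite !proj_mul w_eq proj_sc.
  case: ifP => _; last by rewrite mul0r.
  by rewrite rmorphXn -exprMn Hs expr1n.
under eq_bigr => m _ do under eq_bigr => m' _ do rewrite E.
rewrite (bigD1 (one n)) //= (bigD1 (one n)) //= eqxx scale1r.
rewrite big1 ?addr0; last by move=> m' /negPf ->; rewrite andbF scale0r.
rewrite big1 ?addr0 // => m /negPf nm; apply: big1 => m' _.
by rewrite nm scale0r.
Qed.

Lemma psi_norm1 : adj psi *m psi = 1 ->
  \sum_b \sum_a \sum_r (kent psi ((a, b), r))^* * kent psi ((a, b), r) = 1.
Proof.
move=> /matrixP /(_ 0 0); rewrite kent_adjmul mxE eqxx mulr1n sum_pair => <-.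
by rewrite [RHS]sum_pair exchange_big.
Qed.

Lemma sw_norm n : adj psi *m psi = 1 ->
  adj (swapped_copies psi n) *m swapped_copies psi n = 1.
Proof.
move=> /psi_norm1 H1; apply/matrixP => i j; rewrite (ord1 i) (ord1 j) kent_adjmul mxE eqxx mulr1n.
rewrite sum_pair.
under eq_bigr => ab _.
  under eq_bigr => r _ do rewrite kent_mkket /= rmorph_prod -big_split /=.
  rewrite (sum_prod_ffun (fun i t => (kent psi ((ab.2 i, ab.1 i), t))^* * kent psi ((ab.2 i, ab.1 i), t))).
  over.
rewrite /= sum_pair.
under eq_bigr => a _.
  rewrite (sum_prod_ffun (fun i t => \sum_r (kent psi ((t, a i), r))^* * kent psi ((t, a i), r))).
  over.
rewrite /= (sum_prod_ffun (fun i t => \sum_b \sum_r (kent psi ((b, t), r))^* * kent psi ((b, t), r))).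
by rewrite big1 // => i _.
Qed.

Lemma zero_unc : adj psi *m psi = 1 -> uncommon_information psi = 0.
Proof.
move=> Hn.
have A0 : achievable_rate psi 0.
  exists (fun _ => 0%N), (fun n => @Lam n).
  split; first by move=> n; exact: Lam_LOCC.
  split.
    move=> delta dpos; exists 0%N => // n _ /=.
    by rewrite add0r mulr_ge0 // ltW.
  have -> : (fun n => complex.Re (fidelity (@Lam n (proj (input_state psi n 0)))
                    (proj (swapped_copies psi n)))) = fun _ => 1.
    by apply: boolp.funext => n; rewrite Lam_out /proj fidelity_proj // sw_norm.
  exact: cvg_cst.
have lb : forall r, achievable_rate psi r -> 0 <= r.
  move=> r [k [L [_ [Hk _]]]].
  apply/ler_addgt0Pr => e epos.
  have [N _ HN] := Hk e epos.
  have /= := HN N.+1 (leqnSn N).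
  move=> H; have : 0 <= (r + e) * N.+1%:R by apply: le_trans H.
  by rewrite pmulr_lge0 // ltr0Sn.
apply/eqP; rewrite eq_le; apply/andP; split.
  by apply: ge_inf; [exists 0 => r; exact: lb | exact: A0].
by apply: lb_le_inf; [exists 0 | move=> r; exact: lb].
Qed.

End Proto.

Section Sym.
Variable R : realType.
Local Notation C := R[i].

Lemma sumsq_eq0 (T : finType) (F : T -> C) : \sum_t F t * (F t)^* = 0 -> forall t, F t = 0.
Proof.
move=> /eqP; rewrite psumr_eq0; last by move=> t _; exact: mul_conjC_ge0.
by move=> /allP H t; have /= := H t (mem_index_enum _); rewrite mul_conjC_eq0 => /eqP.
Qed.

Lemma ent_ptrace (T TR : finType) (psi : ket R (T * TR)%type) x' x :
  ent (ptrace2 (proj psi)) x' x = \sum_r kent psi (x', r) * (kent psi (x, r))^*.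
Proof. by rewrite /ptrace2 ent_mkop; apply: eq_bigr => r _; rewrite ent_proj. Qed.

Lemma kent_rho_e (T : finType) (rho : sop R T) x y :
  kent (rho *m mkket (fun z => (z == x)%:R)) y = ent rho y x.
Proof.
rewrite kent_mul -[RHS](sum_delta2 x (fun z => ent rho y z)).
by apply: eq_bigr => z _; rewrite kent_mkket eq_sym.
Qed.

Lemma sym_psi d dR (s : C) (Hs1 : s * s = 1) (Hsr : s^* = s)
  (psi : ket R (('I_d * 'I_d) * 'I_dR)%type) (rho : sop R ('I_d * 'I_d)%type) :
  ptrace2 (proj psi) = rho ->
  (forall w a b, kent (rho *m w) (a, b) = s * kent (rho *m w) (b, a)) ->
  forall a b r, kent psi ((a, b), r) = s * kent psi ((b, a), r).
Proof.
move=> Hp Hsup a b r; apply/eqP; rewrite -subr_eq0; apply/eqP.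
pose F := fun r => kent psi ((a, b), r) - s * kent psi ((b, a), r).
suff H : \sum_r F r * (F r)^* = 0 by exact: (sumsq_eq0 H r).
rewrite /F.
have Hrho : forall x' x, ent rho x' x = \sum_r kent psi (x', r) * (kent psi (x, r))^*.
  by move=> x' x; rewrite -Hp ent_ptrace.
have S1 : forall y x, ent rho (y.1, y.2) x = s * ent rho (y.2, y.1) x.
  by move=> [y1 y2] x; rewrite -!kent_rho_e Hsup.
transitivity (ent rho (a, b) (a, b) - s * ent rho (a, b) (b, a)
   - s * ent rho (b, a) (a, b) + s * s * ent rho (b, a) (b, a)).
  rewrite !Hrho !big_distrr /= -!sumrB -big_split /=; apply: eq_bigr => r0 _.
  rewrite rmorphB rmorphM /= Hsr; ring.
have E1 := S1 (b, a) (a, b); have E2 := S1 (b, a) (b, a); rewrite /= in E1 E2.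
rewrite E1 E2.
set x := ent rho (a, b) (a, b); set y := ent rho (a, b) (b, a).
transitivity ((1 - s * s) * x - s * (1 - s * s) * y); first by ring.
by rewrite Hs1; ring.
Qed.

End Sym.

Section Fact.
Variable R : realType.
Local Notation C := R[i].

Lemma proj_factor m k (v : 'cV[C]_m) (Psi : 'M[C]_(m, k)) :
  adj v *m v = 1 -> Psi *m adj Psi = v *m adj v -> Psi = v *m (adj v *m Psi).
Proof.
move=> nv H; apply/eqP; rewrite -subr_eq0; apply/eqP; apply: AA0.
set P := v *m adj v.
have PP : P *m P = P by rewrite /P mulmxA -(mulmxA v) nv mulmx1.
set w := adj v *m Psi.
have aw : adj w = adj Psi *m v by rewrite /w adjM adjK.
have E1 : Psi *m (adj w *m adj v) = P by rewrite aw !mulmxA H -mulmxA -/P PP.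
have E2 : v *m w *m adj Psi = P by rewrite /w !mulmxA -(mulmxA _ Psi) H -/P PP.
have ww : w *m adj w = 1.
  by rewrite aw /w mulmxA -(mulmxA _ Psi) H !mulmxA nv mul1mx nv.
have E3 : v *m w *m (adj w *m adj v) = P.
  by rewrite mulmxA -(mulmxA v) ww mulmx1.
rewrite adjD adjN adjM mulmxDl !mulmxDr !mulNmx !mulmxN H E1 E2 E3.
by rewrite opprK subrr add0r addNr.
Qed.

Definition psimx (T TR : finType) (psi : ket R (T * TR)%type) : 'M[C]_(#|T|, #|TR|) :=
  \matrix_(i, j) kent psi (enum_val i, enum_val j).

Lemma psimx_ptrace (T TR : finType) (psi : ket R (T * TR)%type) :
  psimx psi *m adj (psimx psi) = ptrace2 (proj psi).
Proof.
apply/matrixP => i j; rewrite mxE /ptrace2 /mkop mxE sum_enum.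
apply: eq_bigr => r _; rewrite ent_proj /adj !mxE enum_rankK.
by rewrite /kent.
Qed.

Lemma pure_factor d dR (phi : ket R ('I_d * 'I_d)%type)
  (psi : ket R (('I_d * 'I_d) * 'I_dR)%type) :
  adj phi *m phi = 1 -> purifies psi (proj phi) ->
  exists c : 'I_dR -> C, forall x r, kent psi (x, r) = kent phi x * c r.
Proof.
move=> nphi [_ Hp].
have E := proj_factor nphi (etrans (psimx_ptrace psi) Hp).
exists (fun r => (adj phi *m psimx psi) 0 (enum_rank r)) => x r.
have /matrixP /(_ (enum_rank x) (enum_rank r)) := E.
by rewrite /psimx mxE !enum_rankK mxE big_ord1.
Qed.

End Fact.

Section Util.
Variable R : realType.
Local Notation C := R[i].
Lemma tstar_adj m n (M : 'M[C]_(m, n)) : map_mx Num.conj (M^T) = adj M.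
Proof. by rewrite /adj map_trmx. Qed.
Lemma trmx_adj m n (M : 'M[C]_(m, n)) : (adj M)^T = map_mx Num.conj M.
Proof. by rewrite /adj trmxK. Qed.

Lemma adj_conj m n (M : 'M[C]_(m, n)) : adj (map_mx Num.conj M) = M^T.
Proof. by apply/matrixP => i j; rewrite /adj !mxE conjCK. Qed.

Lemma conj_adj m n (M : 'M[C]_(m, n)) : map_mx Num.conj (adj M) = M^T.
Proof. by apply/matrixP => i j; rewrite /adj !mxE conjCK. Qed.

Lemma adj_tr m n (M : 'M[C]_(m, n)) : adj (M^T) = map_mx Num.conj M.
Proof. by apply/matrixP => i j; rewrite /adj !mxE. Qed.

End Util.

Section Diag.
Variable R : realType.
Local Notation C := R[i].
Variable d : nat.
Variable lam : 'rV[C]_d.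
Hypothesis lam_ge0 : forall i, 0 <= lam 0 i.
Let Lam := diag_mx lam.
Definition dv : 'rV[C]_d := \row_i (if lam 0 i == 0 then 0 else (sqrtC (lam 0 i))^-1).
Definition ev : 'rV[C]_d := \row_i ((lam 0 i != 0)%:R).
Let D := diag_mx dv.
Let E := diag_mx ev.

Lemma diag_ext (x y : 'rV[C]_d) : (forall j, x 0 j = y 0 j) -> diag_mx x = diag_mx y.
Proof. by move=> H; congr diag_mx; apply/rowP => j; rewrite H. Qed.

Lemma adj_diag (x : 'rV[C]_d) : (forall j, (x 0 j)^* = x 0 j) -> adj (diag_mx x) = diag_mx x.
Proof.
move=> H; apply/matrixP => i j; rewrite /adj !mxE eq_sym.
by case: eqP => [->|_]; rewrite ?mulr1n ?mulr0n ?H ?rmorph0.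
Qed.

Lemma conj_diag (x : 'rV[C]_d) : (forall j, (x 0 j)^* = x 0 j) -> map_mx Num.conj (diag_mx x) = diag_mx x.
Proof.
move=> H; apply/matrixP => i j; rewrite !mxE.
by case: eqP => [->|_]; rewrite ?mulr1n ?mulr0n ?H ?rmorph0.
Qed.

Lemma dv_real j : (dv 0 j)^* = dv 0 j.
Proof.
rewrite mxE; case: ifP => _; first by rewrite rmorph0.
by apply: conj_Creal; apply: ger0_real; rewrite invr_ge0 sqrtC_ge0 lam_ge0.
Qed.

Lemma ev_real j : (ev 0 j)^* = ev 0 j.
Proof. by rewrite mxE rmorph_nat. Qed.

Lemma adjD_ : adj D = D. Proof. exact: adj_diag dv_real. Qed.
Lemma adjE_ : adj E = E. Proof. exact: adj_diag ev_real. Qed.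
Lemma conjE_ : map_mx Num.conj E = E. Proof. exact: conj_diag ev_real. Qed.

Lemma DLD : D *m Lam *m D = E.
Proof.
rewrite !mulmx_diag; apply: diag_ext => j; rewrite !mxE.
case: (lam 0 j =P 0) => [->|/eqP nz]; first by rewrite !mul0r.
rewrite mulrC mulrA -expr2 exprVn sqrtCK mulVf //.
Qed.

Lemma LDE : Lam *m D *m E = Lam *m D.
Proof.
rewrite !mulmx_diag; apply: diag_ext => j; rewrite !mxE.
by case: (lam 0 j =P 0) => [->|/eqP nz]; rewrite ?mul0r ?mulr1.
Qed.

Lemma DE : D *m E = D.
Proof.
rewrite !mulmx_diag; apply: diag_ext => j; rewrite !mxE.
by case H: (lam 0 j == 0); rewrite /= ?mul0r ?mulr1.
Qed.

Lemma EE : E *m E = E.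
Proof.
rewrite !mulmx_diag; apply: diag_ext => j; rewrite !mxE.
by case: (lam 0 j != 0); rewrite ?mul0r ?mulr1.
Qed.

Lemma LE : Lam *m E = Lam.
Proof.
rewrite !mulmx_diag; apply: diag_ext => j; rewrite !mxE.
by case: (lam 0 j =P 0) => [->|/eqP nz]; rewrite ?mul0r ?mulr1.
Qed.

Lemma LDD : Lam *m D *m D = E.
Proof. by rewrite -DLD diag_mxC. Qed.

Lemma LDT : (Lam *m D)^T = Lam *m D.
Proof. by rewrite mulmx_diag tr_diag_mx. Qed.


Lemma DL : D *m Lam = Lam *m D. Proof. exact: diag_mxC. Qed.
Lemma EL : E *m Lam = Lam *m E. Proof. exact: diag_mxC. Qed.
End Diag.

Section Alg.
Variable R : realType.
Local Notation C := R[i].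
Variable d : nat.
Variables Phi P Lam D E Z : 'M[C]_d.
Local Notation A := (Phi *m adj Phi).
Local Notation Zb := (map_mx Num.conj Z).
Local Notation G := (adj P *m (1%:M - E) *m P).
Hypothesis PadjP : P *m adj P = 1%:M.
Hypothesis adjPP : adj P *m P = 1%:M.
Hypothesis PAP : P *m A *m adj P = Lam.
Hypothesis adjD_ : adj D = D.
Hypothesis adjE_ : adj E = E.
Hypothesis conjE_ : map_mx Num.conj E = E.
Hypothesis DLD : D *m Lam *m D = E.
Hypothesis LDE : Lam *m D *m E = Lam *m D.
Hypothesis DE : D *m E = D.
Hypothesis EE : E *m E = E.
Hypothesis LE : Lam *m E = Lam.
Hypothesis LDD : Lam *m D *m D = E.
Hypothesis LDT : (Lam *m D)^T = Lam *m D.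
Hypothesis EL : E *m Lam = Lam *m E.
Hypothesis hZ : Z = adj Phi *m adj P *m D.

Lemma adjZ_ : adj Z = D *m P *m Phi.
Proof. by rewrite hZ !adjM !adjK adjD_ mulmxA. Qed.

Lemma ZZ : adj Z *m Z = E.
Proof.
rewrite adjZ_ hZ.
have -> : D *m P *m Phi *m (adj Phi *m adj P *m D) = D *m (P *m A *m adj P) *m D by rewrite !mulmxA.
by rewrite PAP DLD.
Qed.

Lemma PPhiZ : P *m Phi *m Z = Lam *m D.
Proof.
rewrite hZ; have -> : P *m Phi *m (adj Phi *m adj P *m D) = P *m A *m adj P *m D by rewrite !mulmxA.
by rewrite PAP.
Qed.

Lemma ImE_herm : adj (1%:M - E) = 1%:M - E.
Proof. by rewrite adjD adjN adj1 adjE_. Qed.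

Lemma G_herm : adj G = G.
Proof. by rewrite !adjM adjK ImE_herm mulmxA. Qed.

Lemma ImE_idem : (1%:M - E) *m (1%:M - E) = 1%:M - E.
Proof. by rewrite mulmxBl mul1mx mulmxBr mulmx1 EE subrr subr0. Qed.

Lemma ImE_L : (1%:M - E) *m Lam = 0.
Proof. by rewrite mulmxBl mul1mx EL LE subrr. Qed.

Lemma GG : G *m G = G.
Proof.
rewrite !mulmxA -(mulmxA _ P (adj P)) PadjP mulmx1.
by rewrite -(mulmxA (adj P)) ImE_idem.
Qed.

Lemma GPhi : G *m Phi = 0.
Proof.
apply: AA0; rewrite adjM G_herm.
have -> : G *m Phi *m (adj Phi *m G) = adj P *m ((1%:M - E) *m (P *m A *m adj P)) *m (1%:M - E) *m P.
  by rewrite !mulmxA.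
by rewrite PAP ImE_L mulmx0 !mul0mx.
Qed.

Lemma adjPEP : adj P *m E *m P = 1%:M - G.
Proof.
rewrite mulmxBr mulmx1 mulmxBl adjPP.
by rewrite opprB addrC subrK.
Qed.

Lemma Phi_dec : Phi = adj P *m (Lam *m D) *m adj Z.
Proof.
rewrite adjZ_.
have -> : adj P *m (Lam *m D) *m (D *m P *m Phi) = adj P *m (Lam *m D *m D) *m P *m Phi.
  by rewrite !mulmxA.
by rewrite LDD adjPEP mulmxBl mul1mx GPhi subr0.
Qed.

Definition K1 := Zb *m P.
Definition K0 := G.
Definition L1 := adj P *m Z^T.
Definition L0 := 1%:M - Zb *m Z^T.

Lemma R1 : K1 *m Phi *m L1^T = Phi^T.
Proof.
rewrite /K1 /L1 trmx_mul trmxK trmx_adj.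
have -> : Zb *m P *m Phi *m (Z *m map_mx Num.conj P) = Zb *m (P *m Phi *m Z) *m map_mx Num.conj P.
  by rewrite !mulmxA.
by rewrite PPhiZ [in RHS]Phi_dec trmx_mul trmx_mul LDT !trmx_adj mulmxA.
Qed.

Lemma R2 (L : 'M[C]_d) : K0 *m Phi *m L = 0.
Proof. by rewrite /K0 GPhi mul0mx. Qed.

Lemma R3 : K1 *m Phi *m L0^T = 0.
Proof.
rewrite /K1 /L0 linearB /= trmx1 trmx_mul trmxK.
have -> : Zb^T = adj Z by [].
rewrite [X in Zb *m P *m X]Phi_dec.
have -> : Zb *m P *m (adj P *m (Lam *m D) *m adj Z) = Zb *m (P *m adj P) *m (Lam *m D) *m adj Z.
  by rewrite !mulmxA.
rewrite PadjP mulmx1 mulmxBr mulmx1.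
have -> : Zb *m (Lam *m D) *m adj Z *m (Z *m adj Z) = Zb *m (Lam *m D *m (adj Z *m Z)) *m adj Z.
  by rewrite !mulmxA.
by rewrite ZZ LDE subrr.
Qed.

Lemma C1 : adj K1 *m K1 + adj K0 *m K0 = 1%:M.
Proof.
rewrite /K1 /K0 G_herm GG adjM adj_conj.
have -> : adj P *m Z^T *m (Zb *m P) = adj P *m (Z^T *m Zb) *m P by rewrite !mulmxA.
have -> : Z^T *m Zb = E by rewrite -conj_adj -map_mxM ZZ conjE_.
by rewrite adjPEP subrK.
Qed.

Lemma ZbE : Zb *m E = Zb.
Proof. by rewrite -conjE_ -map_mxM; have -> : Z *m E = Z by rewrite hZ -!mulmxA DE. Qed.

Lemma C2 : adj L1 *m L1 + adj L0 *m L0 = 1%:M.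
Proof.
set Q := Zb *m Z^T.
have aQ : adj Q = Q by rewrite /Q adjM adj_tr adj_conj.
have QQ : Q *m Q = Q.
  rewrite /Q mulmxA -(mulmxA Zb).
  have -> : Z^T *m Zb = E by rewrite -conj_adj -map_mxM ZZ conjE_.
  by rewrite ZbE.
have -> : adj L1 *m L1 = Q.
  by rewrite /L1 adjM adjK adj_tr !mulmxA -(mulmxA Zb) PadjP mulmx1.
rewrite /L0 -/Q adjD adjN adj1 aQ mulmxBl mul1mx mulmxBr mulmx1 QQ subrr subr0.
by rewrite addrC subrK.
Qed.

End Alg.

Section Spec.
Variable R : realType.
Local Notation C := R[i].
Variable d : nat.
Variable Phi : 'M[C]_d.

Lemma spec_facts : exists (P : 'M[C]_d) (lam : 'rV[C]_d),
  [/\ P *m adj P = 1%:M, adj P *m P = 1%:M & P *m (Phi *m adj Phi) *m adj P = diag_mx lam].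
Proof.
have N : Phi *m adj Phi \is normalmx.
  apply/normalmxP; rewrite !tstar_adj.
  by have -> : adj (Phi *m adj Phi) = Phi *m adj Phi by rewrite adjM adjK.
have U := spectral_unitarymx (Phi *m adj Phi).
move: (spectralmx (Phi *m adj Phi)) (spectral_diag (Phi *m adj Phi)) U (orthomx_spectralP N).
move=> P lam U E.
have PP : P *m adj P = 1%:M by rewrite -tstar_adj; apply/unitarymxP.
have iP : invmx P = adj P by rewrite invmx_unitary // tstar_adj.
have PP' : adj P *m P = 1%:M by rewrite -iP mulVmx // unitarymx_unit.
exists P, lam; split => //.
by rewrite E iP !mulmxA PP mul1mx -mulmxA PP mulmx1.
Qed.

Lemma lam_ge0_of (P : 'M[C]_d) (lam : 'rV[C]_d) :
  P *m (Phi *m adj Phi) *m adj P = diag_mx lam -> forall i, 0 <= lam 0 i.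
Proof.
move=> PAP i.
have /matrixP/(_ i i) := PAP; rewrite [in RHS]mxE eqxx mulr1n => <-.
have -> : P *m (Phi *m adj Phi) *m adj P = (P *m Phi) *m adj (P *m Phi) by rewrite adjM !mulmxA.
by rewrite mxE; apply: sumr_ge0 => j _; rewrite /adj !mxE mul_conjC_ge0.
Qed.

End Spec.

Section Final.
Variable R : realType.
Local Notation C := R[i].

Lemma part1 d dR (rho : sop R ('I_d * 'I_d)%type) (psi : ket R (('I_d * 'I_d) * 'I_dR)%type) :
  (supported_on (@sym_vec R d) rho \/ supported_on (@antisym_vec R d) rho) ->
  purifies psi rho -> uncommon_information psi = 0.
Proof.
move=> Hsup [Hn Hp].
have [s [Hs1 Hsr Hsym]] : exists s : C, [/\ s * s = 1, s^* = s &
    forall a b r, kent psi ((a, b), r) = s * kent psi ((b, a), r)].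
  case: Hsup => H.
    exists 1; split; [by rewrite mulr1 | by rewrite rmorph1 |].
    apply: (sym_psi (s := 1)) Hp _; [by rewrite mulr1 | by rewrite rmorph1 |].
    by move=> w a b; rewrite mul1r; exact: H.
  exists (-1); split; [by rewrite mulrNN mulr1 | by rewrite rmorphN1 |].
  apply: (sym_psi (s := -1)) Hp _; [by rewrite mulrNN mulr1 | by rewrite rmorphN1 |].
  by move=> w a b; rewrite mulN1r; exact: H.
pose KI := fun (b : bool) (a' a : 'I_d) => if b then ((a' == a)%:R : C) else 0.
have HA : forall a1 a2 : 'I_d, \sum_b \sum_a' (KI b a' a1)^* * KI b a' a2 = (a1 == a2)%:R.
  move=> a1 a2; rewrite big_bool /= [X in _ + X]big1 ?addr0; last by move=> a' _; rewrite /KI /= mulr0.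
  rewrite -(sum_delta1 a1 (fun a' => ((a' == a2)%:R : C))).
  by apply: eq_bigr => a' _; rewrite /KI rmorph_nat eq_sym.
apply: (@zero_unc R d dR psi KI KI s) => //; last by rewrite Hsr.
- move=> b1 b2 a' b' r; case: b1; case: b2 => /=; rewrite /KI.
  + rewrite (eq_bigr (fun b => (b' == b)%:R * kent psi ((a', b), r))).
      by rewrite sum_delta1 Hsym.
    by move=> b _; rewrite -big_distrr /= sum_delta1.
  + by apply: big1 => b _; apply: big1 => a _; rewrite ?mul0r ?mulr0.
  + by apply: big1 => b _; apply: big1 => a _; rewrite ?mul0r ?mulr0.
  + by apply: big1 => b _; apply: big1 => a _; rewrite ?mul0r ?mulr0.
Qed.

Lemma part2 d dR (phi : ket R ('I_d * 'I_d)%type) (psi : ket R (('I_d * 'I_d) * 'I_dR)%type) :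
  adj phi *m phi = 1 -> purifies psi (proj phi) -> uncommon_information psi = 0.
Proof.
move=> nphi Hpur.
have [c Hc] := pure_factor nphi Hpur.
case: Hpur => Hn _.
pose Phi : 'M[C]_d := \matrix_(a, b) kent phi (a, b).
have [P [lam [PP PP' PAP]]] := spec_facts Phi.
have lg := lam_ge0_of PAP.
set Lam := diag_mx lam.
pose D := diag_mx (dv lam).
pose E := diag_mx (ev lam).
pose Z := adj Phi *m adj P *m D.
have hZ : Z = adj Phi *m adj P *m D by [].
have hD : adj D = D by exact: adjD_.
have hE : adj E = E by exact: adjE_.
have hEc : map_mx Num.conj E = E by exact: conjE_.
have hDLD : D *m Lam *m D = E by exact: DLD.
have hLDE : Lam *m D *m E = Lam *m D by exact: LDE.
have hDE : D *m E = D by exact: DE.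
have hEE : E *m E = E by exact: EE.
have hLE : Lam *m E = Lam by exact: LE.
have hLDD : Lam *m D *m D = E by exact: LDD.
have hLDT : (Lam *m D)^T = Lam *m D by exact: LDT.
have hEL : E *m Lam = Lam *m E by exact: EL.
have r1 : K1 P Z *m Phi *m (L1 P Z)^T = Phi^T by apply: (@R1 _ _ Phi P Lam D E Z).
have r2 : forall L : 'M[C]_d, K0 P E *m Phi *m L = 0 by move=> L; exact: (R2 PAP hE hLE hEL L).
have r3 : K1 P Z *m Phi *m (L0 Z)^T = 0 by apply: (@R3 _ _ Phi P Lam D E Z).
have c1 : adj (K1 P Z) *m K1 P Z + adj (K0 P E) *m K0 P E = 1%:M by apply: (@C1 _ _ Phi P Lam D E Z).
have c2 : adj (L1 P Z) *m L1 P Z + adj (L0 Z) *m L0 Z = 1%:M by apply: (@C2 _ _ Phi P Lam D E Z).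
pose KA := fun (b : bool) (a' a : 'I_d) => (if b then K1 P Z else K0 P E) a' a.
pose KB := fun (b : bool) (a' a : 'I_d) => (if b then L1 P Z else L0 Z) a' a.
have compl : forall (M1 M0 : 'M[C]_d), adj M1 *m M1 + adj M0 *m M0 = 1%:M ->
    forall a1 a2, \sum_b \sum_a' ((if b then M1 else M0) a' a1)^* * (if b then M1 else M0) a' a2 = (a1 == a2)%:R.
  move=> M1 M0 H a1 a2; have /matrixP/(_ a1 a2) := H.
  rewrite !mxE big_bool /= => <-.
  by congr (_ + _); apply: eq_bigr => a' _; rewrite /adj !mxE.
apply: (@zero_unc R d dR psi KA KB 1); last 2 first.
- by rewrite rmorph1 mulr1.
- exact: Hn.
- move=> b1 b2 a' b' r.
  have E0 : \sum_b \sum_a KB b2 b' b * (KA b1 a' a * kent psi ((a, b), r)) =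
     ((if b1 then K1 P Z else K0 P E) *m Phi *m (if b2 then L1 P Z else L0 Z)^T) a' b' * c r.
    rewrite mxE big_distrl; apply: eq_bigr => b _.
    rewrite mxE !big_distrl /=; apply: eq_bigr => a _.
    by rewrite Hc !mxE /KA /KB; ring.
  rewrite E0; clear E0; case: b1; case: b2 => /=.
  + by rewrite r1 mul1r Hc !mxE.
  + by rewrite r3 mxE mul0r.
  + by rewrite r2 mxE mul0r.
  + by rewrite r2 mxE mul0r.
- exact: compl.
- exact: compl.
Qed.

End Final.

Theorem mainTheorem3 (R : realType) :
  (forall (d dR : nat) (rho : sop R ('I_d * 'I_d)%type)
          (psi : ket R (('I_d * 'I_d) * 'I_dR)%type),
     density rho ->
     (supported_on (@sym_vec R d) rho \/ supported_on (@antisym_vec R d) rho) ->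
     purifies psi rho ->
     uncommon_information psi = 0)
  /\
  (forall (d dR : nat) (phi : ket R ('I_d * 'I_d)%type)
          (psi : ket R (('I_d * 'I_d) * 'I_dR)%type),
     adj phi *m phi = 1 ->
     purifies psi (proj phi) ->
     uncommon_information psi = 0).
Proof.
split.
  by move=> d dR rho psi _; exact: part1.
by move=> d dR phi psi; exact: part2.
Qed.
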